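(* Let $q$ be a prime power, let $1 \le k \le n$ be integers, and let $S \subseteq \mathcal{L}_{n,k}$. If $\mu_k(S) = (1+z)^{-1}$ where $z \in \mathbb{R}_{\ge 0}$, then \[ \mu_{k-1}(\partial S) \ge \left(1+ \frac{q(q^{k-1}-1)(q^{n-k}-1)} {(q^k-1)(q^{n-k+1}-1)} \cdot z \right)^{-1} \ge \left(1+\frac{z}{q}\right)^{-1}. \]
   Context: $\mathbb{F}_q$ is the finite field with $q$ elements. $\mathcal{L}_{n,k}$ denotes the set of $k$-dimensional linear subspaces of $(\mathbb{F}_q)^n$. For $S \subseteq \mathcal{L}_{n,k}$, $\mu_k(S) = |S|/|\mathcal{L}_{n,k}|$. For $1 \le k \le n$ and $S \subseteq \mathcal{L}_{n,k}$, the shadow of $S$ is $\partial S = \{B \in \mathcal{L}_{n,k-1} : \exists A \in S,\ B \subset A\}$, and $\mu_{k-1}(\partial S) = |\partial S|/|\mathcal{L}_{n,k-1}|$. *)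

(* Defs.v *)
From HB Require Import structures.
From mathcomp Require Import all_boot all_order all_algebra all_field.
Set Implicit Arguments. Unset Strict Implicit. Unset Printing Implicit Defensive.
Import Order.TTheory GRing.Theory Num.Theory.

(* Subspaces of F^n are represented by {vspace 'rV[F]_n}; over a finite field
   this type is finite (subtype of square matrices). *)
Import VectorInternalTheory.
HB.instance Definition _ (F : finFieldType) (n : nat) :=
  [Countable of {vspace 'rV[F]_n} by <:].
HB.instance Definition _ (F : finFieldType) (n : nat) :=
  [Finite of {vspace 'rV[F]_n} by <:].

Definition Lnk (F : finFieldType) (n k : nat) : {set {vspace 'rV[F]_n}} :=
  [set U : {vspace 'rV[F]_n} | \dim U == k].

Definition mu (R : realFieldType) (F : finFieldType) (n k : nat)
  (S : {set {vspace 'rV[F]_n}}) : R :=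
  (#|S|%:R / #|Lnk F n k|%:R)%R.

Definition shadow (F : finFieldType) (n k : nat) (S : {set {vspace 'rV[F]_n}})
  : {set {vspace 'rV[F]_n}} :=
  [set B in Lnk F n k.-1 | [exists A in S, (B <= A)%VS]].

(* Main.v *)
Require Import Defs.
From HB Require Import structures.
From mathcomp Require Import all_boot all_order all_algebra all_field.
Import Order.TTheory GRing.Theory Num.Theory.
From mathcomp Require Import zify ring lra.
Local Open Scope ring_scope.
Set Implicit Arguments. Unset Strict Implicit.

Section Counting.
Variables (F : finFieldType) (n : nat).
Local Notation T := {vspace 'rV[F]_n}.
Local Notation q := #|F|.

Lemma card_diff (W U : T) : (W <= U)%VS ->
  #|[pred v | (v \in U) && (v \notin W)]| = (q ^ \dim U - q ^ \dim W)%N.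
Proof.
move=> WU; rewrite -!card_vspace -(cardID W U).
have -> : #|[predI U & W]| = #|W|.
  apply: eq_card => x; rewrite !inE.
  by case xW: (x \in W); rewrite ?andbT ?andbF // (subvP WU).
rewrite addKn; apply: eq_card => x; rewrite !inE andbC //.
Qed.

Lemma card_sum (P : pred 'rV[F]_n) : #|P| = (\sum_v (P v : nat))%N.
Proof.
rewrite -sum1_card big_mkcond /=; apply: eq_bigr => v _.
by rewrite unfold_in; case: (P v).
Qed.

Lemma dim_add_line (W : T) v : v \notin W -> \dim (W + <[v]>) = (\dim W).+1.
Proof.
move=> vW.
have v0 : v != 0 by apply: contra vW => /eqP->; rewrite mem0v.
have := dimv_sum_cap W <[v]>; rewrite dim_vline v0.
suff -> : \dim (W :&: <[v]>) = 0%N by rewrite addn0 addn1.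
have := dimvS (capvSr W <[v]>); rewrite dim_vline v0.
case: (leqP (\dim (W :&: <[v]>)) 0) => [|h1 h2]; first by case: (\dim _).
have e : (\dim (W :&: <[v]>) = 1)%N by apply/eqP; rewrite eqn_leq h2.
have := dimv_leqif_eq (capvSr W <[v]>); rewrite e dim_vline v0 /= => -[_].
move/esym/eqP=> h; move: (capvSl W <[v]>); rewrite h => /subvP /(_ v (memv_line v)).
by rewrite (negbTE vW).
Qed.

Lemma upcount (W V : T) : (W <= V)%VS ->
  (#|[set U : T | [&& \dim U == (\dim W).+1, (W <= U)%VS & (U <= V)%VS]]|
    * (q ^ (\dim W).+1 - q ^ \dim W) = q ^ \dim V - q ^ \dim W)%N.
Proof.
move=> WV; set X := [set U : T | _].
have E1 U : U \in X -> #|[pred v | (v \in U) && (v \notin W)]| = (q^(\dim W).+1 - q^\dim W)%N.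
  by rewrite inE => /and3P[/eqP dU WU _]; rewrite card_diff // dU.
rewrite -sum_nat_const -(eq_bigr _ E1) -(card_diff WV) card_sum.
under eq_bigr do rewrite card_sum.
rewrite exchange_big /=; apply: eq_bigr => v _.
case vW: (v \in W).
  by rewrite andbF; apply: big1 => U _; rewrite andbF.
rewrite andbT; case vV: (v \in V); last first.
  apply: big1 => U; rewrite inE => /and3P[_ _ UV].
  by apply/eqP; rewrite eqb0 andbT; apply: contraFN vV => /(subvP UV).
have XW : (W + <[v]>)%VS \in X.
  rewrite inE dim_add_line ?vW // eqxx addvSl subv_add WV /=.
  by rewrite -memvE.
have vWv : v \in (W + <[v]>)%VS by rewrite (subvP (addvSr W <[v]>)) ?memv_line.
rewrite (bigD1 _ XW) /= vWv big1 // => U /andP[].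
move=> H ne; have : U \in X by []; rewrite inE => /and3P[/eqP dU WU _].
apply/eqP; rewrite eqb0 andbT; apply: contra ne => vU.
rewrite eq_sym eqEdim subv_add WU -memvE vU /= dU dim_add_line ?vW //.
Qed.

Lemma q_gt1 : (1 < q)%N.
Proof. exact: card_finNzRing_gt1. Qed.

Lemma upcountN (W V : T) : (W <= V)%VS ->
  (#|[set U : T | [&& \dim U == (\dim W).+1, (W <= U)%VS & (U <= V)%VS]]|
    * (q - 1) = q ^ (\dim V - \dim W) - 1)%N.
Proof.
move=> WV; have := upcount WV.
have le := dimvS WV.
rewrite -(subnKC le) expnS expnD addKn.
have a0 : (0 < q ^ \dim W)%N by rewrite expn_gt0 ltnW ?q_gt1.
move: a0 q_gt1; set a := (q ^ \dim W)%N; set b := (q ^ (\dim V - \dim W))%N.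
set c := #|_|; move=> a0 q1 h.
have h2 : (c * (q - 1) * a = (b - 1) * a)%N by rewrite -mulnA !mulnBl !mul1n [(b * a)%N]mulnC.
by apply/eqP; rewrite -(eqn_pmul2r a0) h2.
Qed.

Lemma sum_cnt (I : finType) (A : {set I}) (P : pred I) :
  (\sum_(i in A) (P i : nat) = #|[set i in A | P i]|)%N.
Proof.
rewrite -sum1_card big_mkcond [RHS]big_mkcond; apply: eq_bigr => i _.
by rewrite inE; case: (i \in A); case: (P i).
Qed.

Lemma downcountN d : forall (W V : T), \dim V = (\dim W + d.+1)%N -> (W <= V)%VS ->
  (#|[set B : T | [&& \dim B == (\dim V).-1, (W <= B)%VS & (B <= V)%VS]]|
    * (q - 1) = q ^ d.+1 - 1)%N.
Proof.
elim: d => [|d IH] W V dV WV.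
  rewrite addn1 /= in dV; rewrite dV /=.
  suff -> : [set B : T | [&& \dim B == \dim W, (W <= B)%VS & (B <= V)%VS]] = [set W].
    by rewrite cards1 mul1n expn1.
  apply/setP => B; rewrite !inE; apply/idP/idP.
    case/and3P => /eqP dB WB _; rewrite eq_sym eqEdim WB dB leqnn //.
  by move/eqP->; rewrite eqxx subvv WV.
set Y := [set B : T | _]; set X := fun B => [set U : T | [&& \dim U == (\dim W).+1, (W <= U)%VS & (U <= B)%VS]].
set Y' := fun U => [set B : T | [&& \dim B == (\dim V).-1, (U <= B)%VS & (B <= V)%VS]].
have dc : (\sum_(B in Y) \sum_(U in X V) ((U <= B)%VS : nat) = \sum_(U in X V) \sum_(B in Y) ((U <= B)%VS : nat))%N.
  by rewrite exchange_big.
have e1 : (\sum_(B in Y) \sum_(U in X V) ((U <= B)%VS : nat) = #|Y| * ((q ^ d.+1 - 1) %/ (q - 1)))%N.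
  rewrite -sum_nat_const; apply: eq_bigr => B; rewrite inE => /and3P[/eqP dB WB BV].
  rewrite sum_cnt.
  have -> : [set i in X V | (i <= B)%VS] = X B.
    apply/setP => U; rewrite !inE; case UB: (U <= B)%VS; rewrite ?andbF ?andbT //.
    by rewrite (subv_trans UB BV) andbT.
  have := upcountN WB; rewrite dB dV addnS /= addKn => <-.
  by rewrite mulnK // subn_gt0 q_gt1.
have e2 : (\sum_(U in X V) \sum_(B in Y) ((U <= B)%VS : nat) = #|X V| * ((q ^ d.+1 - 1) %/ (q - 1)))%N.
  rewrite -sum_nat_const; apply: eq_bigr => U; rewrite inE => /and3P[/eqP dU WU UV].
  rewrite sum_cnt.
  have -> : [set i in Y | (U <= i)%VS] = Y' U.
    apply/setP => B; rewrite !inE; case UB: (U <= B)%VS; rewrite ?andbF ?andbT //.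
    by rewrite (subv_trans WU UB).
  rewrite -(IH U V) ?mulnK ?subn_gt0 ?q_gt1 //.
  by rewrite dU dV !addnS addSn.
have hpos : (0 < (q ^ d.+1 - 1) %/ (q - 1))%N.
  rewrite divn_gt0 ?subn_gt0 ?q_gt1 // leq_sub2r // expnS leq_pmulr //.
  by rewrite expn_gt0 ltnW ?q_gt1.
have : (#|Y| * ((q ^ d.+1 - 1) %/ (q - 1)) = #|X V| * ((q ^ d.+1 - 1) %/ (q - 1)))%N.
  by rewrite -e1 -e2 dc.
move/eqP; rewrite eqn_pmul2r // => /eqP->.
by rewrite upcountN // dV addnC addnK.
Qed.
End Counting.
Section Counts.
Variables (R : realFieldType) (F : finFieldType) (n : nat).
Local Notation T := {vspace 'rV[F]_n}.
Local Notation L := (Lnk F n).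
Local Notation q := (#|F|%:R : R).
Definition gq (m : nat) : R := (q ^+ m - 1) / (q - 1).

Lemma inL j (U : T) : (U \in L j) = (\dim U == j).
Proof. by rewrite inE. Qed.

Lemma q_gt1R : 1 < q.
Proof. by rewrite ltr1n; apply: q_gt1. Qed.

Lemma natq x m : (x * (#|F| - 1) = #|F| ^ m - 1)%N -> x%:R = gq m.
Proof.
have q1 := q_gt1 F.
move/(congr1 (fun k => k%:R : R)); rewrite natrM !natrB ?expn_gt0 ?(ltnW q1) //.
rewrite natrX => h; rewrite /gq -h mulfK // subr_eq0 eq_sym lt_eqF //.
exact: q_gt1R.
Qed.

Lemma dimfull : \dim (fullv : T) = n.
Proof. by rewrite dimvf /dim /= mul1n. Qed.

Lemma countU j (A : T) : A \in L j ->
  #|[set C in L j.+1 | (A <= C)%VS]|%:R = gq (n - j).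
Proof.
rewrite inL => /eqP dA; have := upcountN (subvf A); rewrite dimfull dA => /natq <-.
congr (_ %:R); apply: eq_card => C; rewrite !inE subvf andbT //.
Qed.

Lemma countD j (A : T) : A \in L j.+1 ->
  #|[set B in L j | (B <= A)%VS]|%:R = gq j.+1.
Proof.
rewrite inL => /eqP dA; have := @downcountN F n j 0%VS A; rewrite dimv0 add0n.
move=> /(_ dA (sub0v _)) /natq <-.
congr (_ %:R); apply: eq_card => C; rewrite !inE dA sub0v //.
Qed.

Lemma up_single m (U : T) : \dim U = m -> [set C in L m | (U <= C)%VS] = [set U].
Proof.
move=> dU; apply/setP => C; rewrite !inE; apply/idP/idP.
  by case/andP => /eqP dC UC; rewrite eq_sym eqEdim UC dC dU leqnn.
by move/eqP->; rewrite dU eqxx subvv.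
Qed.

Lemma down_single m (U : T) : \dim U = m -> [set B in L m | (B <= U)%VS] = [set U].
Proof.
move=> dU; apply/setP => C; rewrite !inE; apply/idP/idP.
  by case/andP => /eqP dC UC; rewrite eqEdim UC dC dU leqnn.
by move/eqP->; rewrite dU eqxx subvv.
Qed.

Lemma up_empty m (U : T) : (m < \dim U)%N -> [set C in L m | (U <= C)%VS] = set0.
Proof.
move=> dU; apply/setP => C; rewrite !inE; apply/negbTE; apply/andP => -[/eqP dC UC].
by have := dimvS UC; rewrite dC leqNgt dU.
Qed.

Lemma down_empty m (U : T) : (\dim U < m)%N -> [set B in L m | (B <= U)%VS] = set0.
Proof.
move=> dU; apply/setP => C; rewrite !inE; apply/negbTE; apply/andP => -[/eqP dC UC].
by have := dimvS UC; rewrite dC leqNgt dU.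
Qed.

Lemma countX j (A A' : T) : A \in L j.+1 -> A' \in L j.+1 -> A != A' ->
  #|[set C in L j.+2 | (A <= C)%VS && (A' <= C)%VS]| =
  #|[set B in L j | (B <= A)%VS && (B <= A')%VS]|.
Proof.
rewrite !inL => /eqP dA /eqP dA' neq.
have e1 : [set C in L j.+2 | (A <= C)%VS && (A' <= C)%VS] = [set C in L j.+2 | (A + A' <= C)%VS].
  by apply/setP => C; rewrite !inE subv_add.
have e2 : [set B in L j | (B <= A)%VS && (B <= A')%VS] = [set B in L j | (B <= A :&: A')%VS].
  by apply/setP => C; rewrite !inE subv_cap.
rewrite e1 e2.
have hs := dimv_sum_cap A A'.
have gt : (j.+1 < \dim (A + A'))%N.
  rewrite ltn_neqAle -dA dimvS ?addvSl // andbT; apply: contra neq => /eqP e.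
  have : (A + A' == A)%VS by rewrite eq_sym eqEdim addvSl e leqnn.
  move/eqP/addv_idPl => A'A; rewrite eq_sym eqEdim A'A dA dA' leqnn //.
case: (ltngtP (\dim (A + A')) j.+2) => h.
- by move: h; rewrite ltnS leqNgt gt.
- rewrite up_empty // down_empty ?cards0 //.
  by move: hs; rewrite dA dA'; lia.
- rewrite up_single // down_single ?cards1 //.
  by move: hs; rewrite dA dA' h; lia.
Qed.
End Counts.
Section Quad.
Variables (R : realFieldType) (F : finFieldType) (n : nat).
Local Notation T := {vspace 'rV[F]_n}.
Local Notation L := (Lnk F n).
Local Notation q := (#|F|%:R : R).
Local Notation gq := (@gq R F).

Definition ip j (f g : T -> R) := \sum_(A in L j) f A * g A.
Definition up j (f : T -> R) C := \sum_(A in L j | (A <= C)%VS) f A.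
Definition dn j (f : T -> R) B := \sum_(A in L j.+1 | (B <= A)%VS) f A.
Definition sm j (f : T -> R) := \sum_(A in L j) f A.

Lemma sum_if (X : {set T}) (P : pred T) (x : R) :
  \sum_(C in X) (if P C then x else 0) = x * #|[set C in X | P C]|%:R.
Proof.
rewrite -big_mkcondr /= -sum1_card natr_sum mulr_sumr.
rewrite [RHS](eq_bigl (fun C => (C \in X) && P C)) => [|C]; last by rewrite inE.
by apply: eq_bigr => C _; rewrite mulr1.
Qed.

Lemma exch (X Y : {set T}) (r : T -> T -> bool) (g : T -> R) :
  \sum_(C in X) \sum_(A in Y | r A C) g A = \sum_(A in Y) g A * #|[set C in X | r A C]|%:R.
Proof.
under eq_bigr do rewrite big_mkcondr.
by rewrite exchange_big; apply: eq_bigr => A _; rewrite sum_if.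
Qed.

Lemma sqexp (X Y : {set T}) (r : T -> T -> bool) (f : T -> R) :
  \sum_(C in X) (\sum_(A in Y | r A C) f A) ^+ 2 =
  \sum_(A in Y) \sum_(A' in Y) f A * f A' * #|[set C in X | r A C && r A' C]|%:R.
Proof.
have e C : (\sum_(A in Y | r A C) f A) ^+ 2 = \sum_(A in Y) \sum_(A' in Y)
    (if r A C && r A' C then f A * f A' else 0).
  rewrite expr2 big_distrlr /= big_mkcondr; apply: eq_bigr => A _.
  by case: (r A C) => /=; [rewrite big_mkcondr | rewrite big1].
under eq_bigr do rewrite e.
rewrite exchange_big; apply: eq_bigr => A _.
rewrite exchange_big; apply: eq_bigr => A' _.
rewrite -sum_if; apply: eq_bigr => C _.
by case: (r A C); case: (r A' C).
Qed.

Lemma adj j (g f : T -> R) : ip j g (dn j f) = ip j.+1 (up j g) f.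
Proof.
rewrite /ip /dn /up.
under eq_bigr do rewrite mulr_sumr big_mkcondr /=.
under [RHS]eq_bigr do rewrite mulr_suml big_mkcondr /=.
rewrite exchange_big; apply: eq_bigr => A _; apply: eq_bigr => B _.
by case: (B <= A)%VS; rewrite ?mul0r.
Qed.

Lemma sm_dn j f : sm j (dn j f) = gq j.+1 * sm j.+1 f.
Proof.
rewrite /sm /dn (exch (L j) (L j.+1) (fun A B => (B <= A)%VS)) mulr_sumr.
by apply: eq_bigr => A hA; rewrite countD // mulrC.
Qed.

Lemma identA j f : ip j.+2 (up j.+1 f) (up j.+1 f) =
  ip j (dn j f) (dn j f) + (gq (n - j.+1) - gq j.+1) * ip j.+1 f f.
Proof.
rewrite /ip /up /dn.
under eq_bigr do rewrite -expr2.
under [in RHS]eq_bigr do rewrite -expr2.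
rewrite (sqexp (L j.+2) (L j.+1) (fun A C => (A <= C)%VS)).
rewrite (sqexp (L j) (L j.+1) (fun A B => (B <= A)%VS)).
rewrite mulr_sumr -big_split /=; apply: eq_bigr => A hA.
rewrite (bigD1 A) //= (bigD1 A hA) //= addrAC; congr (_ + _); last first.
  by apply: eq_bigr => A' /andP[hA' ne]; rewrite countX // eq_sym.
have -> : [set C in L j.+2 | (A <= C)%VS && (A <= C)%VS] = [set C in L j.+2 | (A <= C)%VS].
  by apply/setP=> C; rewrite !inE andbb.
have -> : [set C in L j | (C <= A)%VS && (C <= A)%VS] = [set C in L j | (C <= A)%VS].
  by apply/setP=> C; rewrite !inE andbb.
rewrite countU // countD //.
by ring.
Qed.
End Quad.
Section Key.
Variables (R : realFieldType) (F : finFieldType) (n : nat).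
Local Notation T := {vspace 'rV[F]_n}.
Local Notation L := (Lnk F n).
Local Notation q := (#|F|%:R : R).
Local Notation gq := (@gq R F).
Local Notation ip := (@ip R F n).
Local Notation up := (@up R F n).
Local Notation dn := (@dn R F n).
Local Notation sm := (@sm R F n).

Lemma CS (I : finType) (P : pred I) (a b : I -> R) :
  (\sum_(i | P i) a i * b i) ^+ 2 <=
  (\sum_(i | P i) a i ^+ 2) * (\sum_(i | P i) b i ^+ 2).
Proof.
set A := \sum_(i | P i) a i ^+ 2; set B := \sum_(i | P i) b i ^+ 2.
set C := \sum_(i | P i) a i * b i.
have B0 : 0 <= B by apply: sumr_ge0 => i _; exact: sqr_ge0.
case: (eqVneq B 0) => [Bz | Bnz].
  have bz i : P i -> b i = 0.
    move=> Pi; apply/eqP; rewrite -sqrf_eq0; apply/eqP.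
    exact: (psumr_eq0P (fun i _ => sqr_ge0 (b i)) Bz).
  have -> : C = 0 by rewrite /C big1 // => i Pi; rewrite bz ?mulr0.
  by rewrite Bz expr0n /= mulr0.
have Bp : 0 < B by rewrite lt_def Bnz B0.
set t := C / B.
have h : 0 <= \sum_(i | P i) (a i - t * b i) ^+ 2 by apply: sumr_ge0 => i _; exact: sqr_ge0.
have e : \sum_(i | P i) (a i - t * b i) ^+ 2 = A - 2 * t * C + t ^+ 2 * B.
  rewrite /A /B /C !mulr_sumr -sumrB -big_split /=; apply: eq_bigr => i _; ring.
have e2 : A - 2 * t * C + t ^+ 2 * B = A - C ^+ 2 / B.
  by rewrite /t; field; rewrite Bnz.
move: h; rewrite e e2 subr_ge0 ler_pdivrMr //.
Qed.

Lemma CSip j f g : (ip j f g) ^+ 2 <= ip j f f * ip j g g.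
Proof.
have E (u : T -> R) : ip j u u = \sum_(A in L j) u A ^+ 2.
  by apply: eq_bigr => A _; rewrite expr2.
rewrite !E; exact: CS.
Qed.

Lemma ip_ge0 j f : 0 <= ip j f f.
Proof. by apply: sumr_ge0 => A _; rewrite -expr2 sqr_ge0. Qed.

Lemma gq_ge0 m : 0 <= gq m.
Proof.
have q1 := @q_gt1R R F.
by rewrite /gq divr_ge0 // subr_ge0 ?(ltW q1) // exprn_ege1 // ltW.
Qed.

Lemma gq_gt0 m : (0 < m)%N -> 0 < gq m.
Proof.
have q1 := @q_gt1R R F.
move=> m0; by rewrite /gq divr_gt0 // subr_gt0 // exprn_egt1 // -lt0n m0.
Qed.

Definition nu j : R := q * gq j * gq (n - j.+1).

Lemma nu_ge0 j : 0 <= nu j.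
Proof. by rewrite /nu; apply: mulr_ge0; [apply: mulr_ge0|]; rewrite ?gq_ge0 ?ler0n. Qed.

Lemma nu_rec j : (j.+1 < n)%N -> nu j + (gq (n - j.+1) - gq j.+1) = nu j.+1.
Proof.
move=> jn; have e1 : (n - j.+1 = (n - j.+2).+1)%N by lia.
have q1 := @q_gt1R R F.
have qn : q - 1 != 0 by rewrite subr_eq0 eq_sym lt_eqF.
rewrite /nu /gq e1 !exprS; field; exact: qn.
Qed.

Lemma dnbound j : (forall g, sm j g = 0 -> ip j.+1 (up j g) (up j g) <= nu j * ip j g g) ->
  forall h, sm j.+1 h = 0 -> ip j (dn j h) (dn j h) <= nu j * ip j.+1 h h.
Proof.
move=> IH h h0; set g := dn j h.
have g0 : sm j g = 0 by rewrite /g sm_dn h0 mulr0.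
have e : ip j g g = ip j.+1 (up j g) h by rewrite {2}/g adj.
have cs := CSip j.+1 (up j g) h; rewrite -e in cs.
have := IH g g0.
case: (eqVneq (ip j g g) 0) => [->|nz hb]; first by move=> _; rewrite mulr_ge0 ?nu_ge0 ?ip_ge0.
have pos : 0 < ip j g g by rewrite lt_def nz ip_ge0.
have : (ip j g g) ^+ 2 <= nu j * ip j g g * ip j.+1 h h.
  by apply: le_trans cs _; rewrite ler_wpM2r ?ip_ge0.
by rewrite expr2 (mulrC (nu j)) -mulrA ler_pM2l.
Qed.

Lemma key j : (j < n)%N -> forall h, sm j h = 0 ->
  ip j.+1 (up j h) (up j h) <= nu j * ip j h h.
Proof.
elim: j => [|j IH] jn h h0.
  have upz C : up 0 h C = 0.
    rewrite /up -[RHS]h0 /sm; apply: eq_bigl => A.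
    case hA: (A \in L 0) => //=; move: hA; rewrite inL dimv_eq0 => /eqP ->.
    by rewrite sub0v.
  have -> : ip 1 (up 0 h) (up 0 h) = 0.
    by rewrite /ip big1 // => C _; rewrite upz mul0r.
  by apply: mulr_ge0; [exact: nu_ge0 | exact: ip_ge0].
rewrite identA -(nu_rec jn) [in X in _ <= X]mulrDl lerD2r.
exact: (dnbound (IH (ltnW jn)) h0).
Qed.
End Key.
Lemma final_alg (R : realFieldType) (a b Nk Nj G gk nu x z : R) :
  0 < Nk -> 0 < G -> 0 < gk -> 0 <= nu -> 0 <= z -> 0 <= b ->
  x = a / Nk -> x = (1 + z)^-1 -> Nj * G = gk * Nk ->
  (gk * a) ^+ 2 <= b * (nu * (a - x * a) + x ^+ 2 * G ^+ 2 * Nj) ->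
  (1 + nu / (gk * G) * z)^-1 <= b / Nj.
Proof.
move=> Nk0 G0 gk0 nu0 z0 b0 hx1 hx2 hN H.
have z1 : 0 < 1 + z by rewrite ltr_pwDl.
have Gn : G != 0 by rewrite gt_eqF.
have gkn : gk != 0 by rewrite gt_eqF.
have Nkn : Nk != 0 by rewrite gt_eqF.
have z1n : 1 + z != 0 by rewrite gt_eqF.
have eNj : Nj = gk * Nk / G by rewrite -hN mulfK.
have ea : a = Nk / (1 + z) by rewrite -[a](divfK Nkn) -hx1 hx2 mulrC.
have c0 : 0 <= nu / (gk * G) * z by rewrite mulr_ge0 // divr_ge0 // mulr_ge0 // ltW.
have cz : 0 < 1 + nu / (gk * G) * z by rewrite ltr_pwDl.
have Njp : 0 < Nj by rewrite eNj divr_gt0 // mulr_gt0.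
rewrite ler_pdivlMr // -(@ler_pM2l _ (1 + nu / (gk * G) * z)) // mulrA mulfV ?gt_eqF // mul1r.
set K := gk * G * Nk / (1 + z) ^+ 2.
have Kp : 0 < K by rewrite /K divr_gt0 ?exprn_gt0 // !mulr_gt0.
rewrite -(@ler_pM2l _ K) //.
have E1 : (gk * a) ^+ 2 = K * Nj by rewrite /K eNj ea; field; rewrite z1n Gn.
have E2 : b * (nu * (a - x * a) + x ^+ 2 * G ^+ 2 * Nj) = K * ((1 + nu / (gk * G) * z) * b).
  by rewrite /K eNj ea hx2; field; rewrite z1n Gn gkn.
by rewrite -E1 -E2.
Qed.
Lemma second_alg (R : realFieldType) (q u v z : R) :
  1 < q -> 1 <= u -> 1 <= v -> 0 <= z ->
  (1 + z / q)^-1 <= (1 + q * (u - 1) * (v - 1) / ((q * u - 1) * (q * v - 1)) * z)^-1.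
Proof.
move=> q1 u1 v1 z0.
have q0 : 0 < q by apply: lt_trans q1.
have h1 : q * (u - 1) <= q * u - 1 by nra.
have h2 : q * (v - 1) <= q * v - 1 by nra.
have h3 : 0 <= q * (u - 1) by nra.
have h4 : 0 <= q * (v - 1) by nra.
have Yp : 0 < (q * u - 1) * (q * v - 1) by nra.
have c0 : 0 <= q * (u - 1) * (v - 1) / ((q * u - 1) * (q * v - 1)).
  by rewrite divr_ge0 ?(ltW Yp) // -mulrA mulr_ge0 // ?(ltW q0) // mulr_ge0 // subr_ge0.
have p1 : 0 < 1 + z / q by rewrite ltr_pwDl // divr_ge0 // ltW.
have p2 : 0 < 1 + q * (u - 1) * (v - 1) / ((q * u - 1) * (q * v - 1)) * z.
  by rewrite ltr_pwDl // mulr_ge0.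
rewrite lef_pV2 ?posrE // lerD2l (mulrC _ z) ler_wpM2l // ler_pdivrMr //.
rewrite -(@ler_pM2l _ q) // [in X in _ <= X]mulrA mulfV ?gt_eqF // mul1r.
have -> : q * (q * (u - 1) * (v - 1)) = (q * (u - 1)) * (q * (v - 1)) by ring.
exact: ler_pM.
Qed.
Lemma ratio (R : realFieldType) (F : finFieldType) (n j : nat) : (j < n)%N ->
  let q := (#|F|%:R : R) in
  q * (q ^+ j - 1) * (q ^+ (n - j.+1) - 1) / ((q ^+ j.+1 - 1) * (q ^+ (n - j.+1 + 1) - 1))
  = @nu R F n j / (@gq R F j.+1 * @gq R F (n - j)).
Proof.
move=> jn q; have e : (n - j = n - j.+1 + 1)%N by lia.
have q1 : 1 < q := @q_gt1R R F.
have qn : q - 1 != 0 by rewrite subr_eq0 eq_sym lt_eqF.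
have p1 m : q ^+ m.+1 - 1 != 0.
  by rewrite subr_eq0 eq_sym lt_eqF // exprn_egt1.
rewrite /nu /gq e addn1; field.
by rewrite qn p1 p1.
Qed.

Unset Implicit Arguments.

Theorem theorem1 (R : realFieldType) (F : finFieldType) (n k : nat)
  (S : {set {vspace 'rV[F]_n}}) (z : R) :
  (1 <= k)%N -> (k <= n)%N ->
  S \subset Lnk F n k ->
  0 <= z ->
  mu R k S = (1 + z)^-1 ->
  let q : R := #|F|%:R in
  (1 + (q * (q ^+ k.-1 - 1) * (q ^+ (n - k) - 1))
         / ((q ^+ k - 1) * (q ^+ (n - k + 1) - 1)) * z)^-1
    <= mu R k.-1 (shadow k S)
  /\ (1 + z / q)^-1
    <= (1 + (q * (q ^+ k.-1 - 1) * (q ^+ (n - k) - 1))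
         / ((q ^+ k - 1) * (q ^+ (n - k + 1) - 1)) * z)^-1.
Proof.
move=> k1 kn SL z0 hmu q.
case: k k1 kn SL hmu => [//|j] _ kn SL hmu.
have jn : (j < n)%N := kn.
change ((1 + q * (q ^+ j - 1) * (q ^+ (n - j.+1) - 1) /
   ((q ^+ j.+1 - 1) * (q ^+ (n - j.+1 + 1) - 1)) * z)^-1 <= mu R j (shadow j.+1 S) /\
  (1 + z / q)^-1 <= (1 + q * (q ^+ j - 1) * (q ^+ (n - j.+1) - 1) /
   ((q ^+ j.+1 - 1) * (q ^+ (n - j.+1 + 1) - 1)) * z)^-1).
split; last first.
  have q1 : 1 < q := @q_gt1R R F.
  have u1 m : 1 <= q ^+ m by rewrite exprn_ege1 // ltW.
  by rewrite exprS addn1 exprS; apply: second_alg.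
rewrite ratio //.
pose L := Lnk F n.
pose a : R := #|S|%:R; pose Nk : R := #|L j.+1|%:R; pose Nj : R := #|L j|%:R.
pose Sh := shadow j.+1 S; pose b : R := #|Sh|%:R.
pose x := mu R j.+1 S.
have hx1 : x = a / Nk by [].
have z1 : 0 < 1 + z by rewrite ltr_pwDl.
have xpos : 0 < x by rewrite /x hmu invr_gt0.
have Nk0 : 0 < Nk.
  rewrite lt_def ler0n andbT; apply/negP => /eqP e.
  by move: xpos; rewrite hx1 e invr0 mulr0 ltxx.
pose s := fun A : {vspace 'rV[F]_n} => ((A \in S) : nat)%:R : R.
pose f := fun A => s A - x.
pose one := fun _ : {vspace 'rV[F]_n} => (1 : R).
pose G := @gq R F (n - j).
have sm_s : @sm R F n j.+1 s = a.
  rewrite /sm; transitivity (\sum_(A in L j.+1) (if A \in S then (1 : R) else 0)).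
    by apply: eq_bigr => A _; rewrite /s; case: (A \in S).
  rewrite sum_if mul1r /a; congr (_ %:R); apply: eq_card => A; rewrite inE.
  by case AS: (A \in S); rewrite ?andbT ?andbF // (subsetP SL).
have sm_one : @sm R F n j.+1 one = Nk by rewrite /sm sumr_const.
have f0 : @sm R F n j.+1 f = 0.
  rewrite /sm /f sumrB -/(@sm R F n j.+1 s) sm_s sumr_const -mulr_natr.
  by rewrite hx1 divfK ?subrr // gt_eqF.
have dn_one B : B \in L j -> @dn R F n j one B = G.
  move=> hB; rewrite /dn (eq_bigl (fun A => A \in [set A in L j.+1 | (B <= A)%VS])).
    by rewrite sumr_const countU.
  by move=> A; rewrite inE.
have NjG : Nj * G = @gq R F j.+1 * Nk.
  rewrite -sm_one -sm_dn /sm (eq_bigr (fun _ => G)) => [|B hB]; last exact: dn_one.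
  by rewrite sumr_const -mulr_natr mulrC.
pose g := @dn R F n j s.
pose d := @dn R F n j f.
have gdec B : B \in L j -> g B = d B + x * G.
  move=> hB; rewrite -(dn_one B hB) /g /d /dn mulr_sumr -big_split /=.
  by apply: eq_bigr => A _; rewrite /f /one mulr1 subrK.
have d0 : @sm R F n j d = 0 by rewrite /d sm_dn f0 mulr0.
have ipg : @ip R F n j g g = @ip R F n j d d + x ^+ 2 * G ^+ 2 * Nj.
  rewrite /ip (eq_bigr (fun B => d B * d B + (2 * x * G) * d B + x ^+ 2 * G ^+ 2)).
    by rewrite !big_split /= -mulr_sumr -/(@sm R F n j d) d0 mulr0 addr0 sumr_const -mulr_natr.
  by move=> B hB; rewrite gdec //; ring.
have ipf : @ip R F n j.+1 f f = a - x * a.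
  rewrite /ip (eq_bigr (fun A => s A * (1 - 2 * x) + x ^+ 2)) => [|A _]; last first.
    by rewrite /f /s; case: (A \in S); rewrite /= ?mulr1n ?mulr0n; ring.
  rewrite big_split /= -mulr_suml -/(@sm R F n j.+1 s) sm_s sumr_const -[_ *+ #|_|]mulr_natr.
  have xNk : x * Nk = a by rewrite hx1 divfK // gt_eqF.
  by rewrite -/Nk expr2 -mulrA xNk; ring.
have hd : @ip R F n j d d <= @nu R F n j * @ip R F n j.+1 f f.
  exact: (dnbound (key jn) f0).
have smg : @sm R F n j g = @gq R F j.+1 * a by rewrite /g sm_dn sm_s.
pose sh := fun B : {vspace 'rV[F]_n} => ((B \in Sh) : nat)%:R : R.
have gsh : @sm R F n j g = \sum_(B in L j) sh B * g B.
  apply: eq_bigr => B hB; rewrite /sh; case BS: (B \in Sh); rewrite /= ?mul1r //.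
  rewrite mul0r /g /dn big1 // => A /andP[hA BA]; rewrite /s.
  case AS: (A \in S) => //; move: BS; rewrite inE hB /=.
  by have -> : [exists A0 in S, (B <= A0)%VS] by apply/existsP; exists A; rewrite AS BA.
have shb : \sum_(B in L j) sh B ^+ 2 = b.
  transitivity (\sum_(B in L j) (if B \in Sh then (1 : R) else 0)).
    by apply: eq_bigr => B _; rewrite /sh; case: (B \in Sh); rewrite /= ?expr1n ?expr0n.
  rewrite sum_if mul1r /b; congr (_ %:R); apply: eq_card => B; rewrite inE.
  case BS: (B \in Sh); rewrite ?andbT ?andbF //.
  by move: BS; rewrite inE => /andP[].
have cs : (@gq R F j.+1 * a) ^+ 2 <= b * @ip R F n j g g.
  rewrite -smg gsh -shb.
  have E : @ip R F n j g g = \sum_(B in L j) g B ^+ 2 by apply: eq_bigr => B _; rewrite expr2.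
  rewrite E; exact: CS.
have main : (@gq R F j.+1 * a) ^+ 2 <=
    b * (@nu R F n j * (a - x * a) + x ^+ 2 * G ^+ 2 * Nj).
  apply: le_trans cs _; rewrite ler_wpM2l ?ler0n // ipg lerD2r -ipf; exact: hd.
have G0 : 0 < G by apply: gq_gt0; rewrite subn_gt0.
have gk0 : 0 < @gq R F j.+1 by apply: gq_gt0.
change ((1 + @nu R F n j / (@gq R F j.+1 * G) * z)^-1 <= b / Nj).
exact: (final_alg Nk0 G0 gk0 (nu_ge0 _ _ _ _) z0 (ler0n _ _) hx1 hmu NjG main).
Qed.
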